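(* Let $\bm X=(X_k:k\in V)$ have standard exponential margins and follow a tree geometric extremal graphical model with gauge $$g(\bm x)=\sum_{\{i,j\}\in E}\big(g_{\{i,j\}}(x_i,x_j)-x_i-x_j\big)+\sum_{k\in V}x_k,$$ where for each edge $g_{\{i,j\}}(x_i,x_j)=\frac{x_i}{\theta_{ij}}+\frac{x_j}{\gamma_{ij}}+\Big(1-\frac{1}{\theta_{ij}}-\frac{1}{\gamma_{ij}}\Big)\min(x_i,x_j)$ with $\theta_{ij},\gamma_{ij}\in(0,1)$. For $k<l$ in $V$, let $\mathrm{pa}(k,l)$ be the set of edges along the shortest path from $k$ to $l$, each written as an ordered pair $(i,j)$ with $i$ the endpoint nearer to $k$. Then $$g_{\{k,l\}}(x_k,x_l)=\frac{x_k}{\max_{(i,j)\in\mathrm{pa}(k,l)}\theta_{ij}}+\frac{x_l}{\max_{(i,j)\in\mathrm{pa}(k,l)}\gamma_{ij}}+\Big(1-\frac{1}{\max_{(i,j)\in\mathrm{pa}(k,l)}\theta_{ij}}-\frac{1}{\max_{(i,j)\in\mathrm{pa}(k,l)}\gamma_{ij}}\Big)\min(x_k,x_l).$$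
   Context: A tree is a connected acyclic graph $(V,E)$. $g_{\{k,l\}}(x_k,x_l)=\min_{x_s\ge0,\,s\notin\{k,l\}}g(\bm x)$ is the bivariate marginal gauge. The parameterization of an edge's gauge depends on orientation: writing the edge as $(j,i)$ instead of $(i,j)$ corresponds to $\theta_{ji}=\gamma_{ij}$ and $\gamma_{ji}=\theta_{ij}$. *)

(* Defs.v *)
From HB Require Import structures.
From mathcomp Require Import all_boot all_order all_algebra.
From mathcomp Require Import reals.
Set Implicit Arguments. Unset Strict Implicit. Unset Printing Implicit Defensive.
Import Order.TTheory GRing.Theory Num.Theory.
Local Open Scope ring_scope.

Definition simple_graph (d : nat) (e : rel 'I_d) : Prop :=
  (forall i, ~~ e i i) /\ (forall i j, e i j = e j i).

Definition has_cycle (d : nat) (e : rel 'I_d) : Prop :=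
  exists (v0 : 'I_d) (c : seq 'I_d),
    [/\ 2 <= size c, uniq (v0 :: c), path e v0 c & e (last v0 c) v0]%N.

Definition is_tree (d : nat) (e : rel 'I_d) : Prop :=
  [/\ simple_graph e, (forall u v, connect e u v) & ~ has_cycle e].

Definition edge_gauge (R : realType) (th ga xi xj : R) : R :=
  xi / th + xj / ga + (1 - th^-1 - ga^-1) * Num.min xi xj.

(* Tree gauge; each edge {i,j} counted once as the ordered pair (i,j), i < j,
   parameterized by th i j, ga i j. *)
Definition tree_gauge (R : realType) (d : nat) (e : rel 'I_d)
    (th ga : 'I_d -> 'I_d -> R) (x : 'I_d -> R) : R :=
  \sum_(i < d) \sum_(j < d | (i < j)%N && e i j)
      (edge_gauge (th i j) (ga i j) (x i) (x j) - x i - x j)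
  + \sum_(k < d) x k.

Definition path_edges (d : nat) (k : 'I_d) (p : seq 'I_d) : seq ('I_d * 'I_d) :=
  zip (k :: p) p.

(* Maximum of f over the (oriented) path edges; all values are positive here,
   so 0 is a neutral start. *)
Definition path_max (R : realType) (d : nat) (f : 'I_d -> 'I_d -> R)
    (k : 'I_d) (p : seq 'I_d) : R :=
  \big[Num.max/0]_(ij <- path_edges k p) f ij.1 ij.2.

(* Main.v *)
Require Import Defs.
From HB Require Import structures.
From mathcomp Require Import all_boot all_order all_algebra.
From mathcomp Require Import reals.
From mathcomp Require Import lra ring.
Set Implicit Arguments. Unset Strict Implicit. Unset Printing Implicit Defensive.
Import Order.TTheory GRing.Theory Num.Theory.
Local Open Scope ring_scope.

Section Gen.
Variable R : realType.
Variable d : nat.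
Implicit Types (E : rel 'I_d) (x : 'I_d -> R).

Definition pos (a : R) := Num.max a 0.

Lemma pos_ge0 a : 0 <= pos a.
Proof. by rewrite /pos le_max lexx orbT. Qed.
Lemma pos_ge a : a <= pos a.
Proof. by rewrite /pos le_max lexx. Qed.
Lemma pos_add a b : pos (a + b) <= pos a + pos b.
Proof.
rewrite /pos ge_max; apply/andP; split.
- by apply: lerD; rewrite le_max lexx.
- by apply: addr_ge0; rewrite le_max lexx orbT.
Qed.
Lemma pos_eq0 a : a <= 0 -> pos a = 0.
Proof. by move=> h; rewrite /pos max_r. Qed.
Lemma pos_id a : 0 <= a -> pos a = a.
Proof. by move=> h; rewrite /pos max_l. Qed.

Lemma edge_gaugeE (t g a b : R) :
  edge_gauge t g a b = Num.max a b + (t^-1 - 1) * pos (a - b) + (g^-1 - 1) * pos (b - a).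
Proof.
rewrite /edge_gauge; case: (leP a b) => h.
- rewrite (pos_eq0 (a:=a-b)) ?subr_le0 // pos_id ?subr_ge0 //.
  rewrite ?(max_r h) ?(min_l h); ring.
- rewrite (pos_eq0 (a:=b-a)) ?subr_le0 ?ltW // pos_id ?subr_ge0 ?ltW //.
  rewrite ?(max_l (ltW h)) ?(min_r (ltW h)); ring.
Qed.

Definition esum E (F : 'I_d -> 'I_d -> R) : R :=
  \sum_(p : 'I_d * 'I_d | (p.1 < p.2)%N && E p.1 p.2) F p.1 p.2.

Definition ecard E := #|[pred p : 'I_d * 'I_d | (p.1 < p.2)%N && E p.1 p.2]|.

Definition remE E (a b : 'I_d) : rel 'I_d :=
  fun i j => E i j && ~~ (((i == a) && (j == b)) || ((i == b) && (j == a))).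

Definition Qf (th ga : 'I_d -> 'I_d -> R) x (i j : 'I_d) : R :=
  ((th i j)^-1 - 1) * pos (x i - x j) + ((ga i j)^-1 - 1) * pos (x j - x i).

Lemma tree_gaugeE E th ga x :
  tree_gauge E th ga x =
  \sum_k x k - esum E (fun i j => Num.min (x i) (x j)) + esum E (Qf th ga x).
Proof.
rewrite /tree_gauge pair_big_dep /esum /=.
have -> : \sum_(p : 'I_d * 'I_d | true && ((p.1 < p.2)%N && E p.1 p.2))
   (edge_gauge (th p.1 p.2) (ga p.1 p.2) (x p.1) (x p.2) - x p.1 - x p.2)
  = \sum_(p : 'I_d * 'I_d | (p.1 < p.2)%N && E p.1 p.2)
     (Qf th ga x p.1 p.2 - Num.min (x p.1) (x p.2)).
  apply: eq_big => // p _.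
  rewrite edge_gaugeE /Qf -[Num.max _ _](addKr (Num.min (x p.1) (x p.2))) addr_min_max.
  ring.
rewrite sumrB; ring.
Qed.

Lemma rem_pred E (a b : 'I_d) : (a < b)%N -> forall p : 'I_d * 'I_d,
  ((p.1 < p.2)%N && remE E a b p.1 p.2) = ((p.1 < p.2)%N && E p.1 p.2) && (p != (a, b)).
Proof.
move=> ab [i j] /=; rewrite /remE xpair_eqE.
case: (ltnP i j) => //= ij; case: (E i j) => //=.
have H : ~~ ((i == b) && (j == a)).
  apply/andP => -[/eqP hi /eqP hj]; subst i j.
  by have := ltn_trans ab ij; rewrite ltnn.
by rewrite (negbTE H) orbF.
Qed.

Lemma esum_rem E F (a b : 'I_d) : (a < b)%N -> E a b ->
  esum E F = F a b + esum (remE E a b) F.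
Proof.
move=> ab Eab; rewrite /esum (bigD1 (a, b)) /=; last by rewrite ab Eab.
by congr (_ + _); apply: eq_bigl => p; rewrite rem_pred.
Qed.

Lemma ecard_rem E (a b : 'I_d) : (a < b)%N -> E a b -> ecard E = (ecard (remE E a b)).+1.
Proof.
move=> ab Eab; rewrite /ecard (cardD1 (a, b)) [(a, b) \in _]inE /= ab Eab add1n; congr (_.+1).
apply: eq_card => p; rewrite !inE /= rem_pred // andbC. case: p => i j. by rewrite /= !xpair_eqE.
Qed.

Lemma remE_sub E a b : subrel (remE E a b) E.
Proof. by move=> i j /andP[]. Qed.

Lemma remE_sym E a b : symmetric E -> symmetric (remE E a b).
Proof.
move=> sE i j; rewrite /remE sE [(j == a) && _]andbC [(j == b) && _]andbC orbC.
by [].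
Qed.

Lemma remE_swap E a b : remE E a b =2 remE E b a.
Proof. by move=> i j; rewrite /remE orbC. Qed.

Lemma connect_subrel E E' : subrel E' E -> subrel (connect E') (connect E).
Proof. by move=> h; apply: connect_sub => u v /h; apply: connect1. Qed.

Lemma nocycle_rem E a b : ~ has_cycle E -> ~ has_cycle (remE E a b).
Proof.
move=> nc [v0 [c [h1 h2 h3 h4]]]; apply: nc; exists v0, c; split => //.
  exact: sub_path (@remE_sub E a b) _ _ h3.
exact: remE_sub h4.
Qed.

Lemma noconnect_rem E (a b : 'I_d) : symmetric E -> ~ has_cycle E -> E a b -> a != b ->
  ~~ connect (remE E a b) a b.
Proof.
move=> sE nc Eab nab; apply/negP => /connectP [p pth].
case: (shortenP pth) => p' pth' up' _ lst.
apply: nc; exists a, p'; split => //.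
- case: p' pth' up' lst => [|c [|c' p'']] //=.
    by move=> _ _ ba; rewrite ba eqxx in nab.
  by move=> /andP[h _] _ ba; move: h; rewrite -ba /remE !eqxx andbF.
- exact: sub_path (@remE_sub E a b) _ _ pth'.
- by rewrite -lst sE.
Qed.

Definition pwdis E (S : {set 'I_d}) :=
  forall s t, s \in S -> t \in S -> connect E s t -> s = t.

Lemma add_one E E' (S : {set 'I_d}) (a b s : 'I_d) :
  connect_sym E' -> subrel E' E -> E a b -> ~~ connect E' a b -> pwdis E S ->
  s \in S -> connect E' s a -> pwdis E' (b |: S) /\ b \notin S.
Proof.
move=> cs sub Eab nab pw sS sa.
have cE := connect_subrel sub.
have sb : connect E s b := connect_trans (cE _ _ sa) (connect1 Eab).
have H : forall t, t \in S -> ~~ connect E' b t.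
  move=> t tS; apply/negP => bt.
  have st : connect E s t := connect_trans sb (cE _ _ bt).
  have est := pw _ _ sS tS st; subst t.
  by have := connect_trans bt sa; rewrite cs => ab; rewrite ab in nab.
have bS : b \notin S.
  by apply/negP => bS; have := H _ bS; rewrite connect0.
split => // u t; rewrite !in_setU1 => /orP[/eqP->|uS] /orP[/eqP->|tS] //.
- by move=> bt; have := H _ tS; rewrite bt.
- by rewrite cs => bu; have := H _ uS; rewrite bu.
- by move=> ut; exact: pw _ _ uS tS (cE _ _ ut).
Qed.

Lemma forest_lb n : forall E (S : {set 'I_d}) x, ecard E = n -> symmetric E -> ~ has_cycle E ->
  (forall v, 0 <= x v) -> pwdis E S ->
  \sum_(s in S) x s <= \sum_v x v - esum E (fun i j => Num.min (x i) (x j)).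
Proof.
elim: n => [|n IH] E S x ce sE nc x0 pw.
  have -> : esum E (fun i j => Num.min (x i) (x j)) = 0.
    by rewrite /esum big_pred0 // => p; have := card0_eq ce p; rewrite !inE.
  rewrite subr0 [X in _ <= X](bigID (fun i => i \in S)) /= lerDl.
  by apply: sumr_ge0.
have : (0 < ecard E)%N by rewrite ce.
case/card_gt0P => -[a b]; rewrite inE /= => /andP[ab Eab].
have anb : a != b by apply/eqP => h; rewrite h ltnn in ab.
have nab := noconnect_rem sE nc Eab anb.
set E' := remE E a b.
have sE' : symmetric E' := remE_sym a b sE.
have cs := sym_connect_sym sE'.
have ce' : ecard E' = n by move: ce; rewrite (ecard_rem ab Eab) => -[].
have IH' := IH E' _ x ce' sE' (@nocycle_rem E a b nc) x0.
rewrite (esum_rem _ ab Eab).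
suff [S' [pw' le]] : exists S', pwdis E' S' /\
    \sum_(s in S) x s + Num.min (x a) (x b) <= \sum_(s in S') x s.
  by have := IH' _ pw'; lra.
have m1 : Num.min (x a) (x b) <= x a by rewrite ge_min lexx.
have m2 : Num.min (x a) (x b) <= x b by rewrite ge_min lexx orbT.
have xa0 := x0 a; have xb0 := x0 b.
case: (pickP (fun s => (s \in S) && connect E' s a)) => [s /andP[sS sa] | nA].
  have [pw' bS] := add_one cs (@remE_sub E a b) Eab nab pw sS sa.
  exists (b |: S); split => //; rewrite big_setU1 //=; lra.
case: (pickP (fun s => (s \in S) && connect E' s b)) => [s /andP[sS sb] | nB].
  have Eba : E b a by rewrite sE.
  have nba : ~~ connect E' b a by rewrite cs.
  have [pw' aS] := add_one cs (@remE_sub E a b) Eba nba pw sS sb.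
  exists (a |: S); split => //; rewrite big_setU1 //=; lra.
have bS : b \notin S by apply/negP => bS; have := nB b; rewrite bS connect0.
have aS : a \notin b |: S.
  by rewrite in_setU1 negb_or anb /=; apply/negP => aS; have := nA a; rewrite aS connect0.
exists (a |: (b |: S)); split; last by rewrite !big_setU1 //=; lra.
move=> u t; rewrite !in_setU1 => /or3P[/eqP->|/eqP->|uS] /or3P[/eqP->|/eqP->|tS] // h.
- by rewrite h in nab.
- by move: h; rewrite cs => h; have := nA t; rewrite tS h.
- by move: h; rewrite cs => h; rewrite h in nab.
- by move: h; rewrite cs => h; have := nB t; rewrite tS h.
- by have := nA u; rewrite uS h.
- by have := nB u; rewrite uS h.
- exact: pw _ _ uS tS (connect_subrel (@remE_sub E a b) h).
Qed.

Lemma path_rem E (c w v : 'I_d) q : path E v q -> c \notin v :: q ->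
  path (remE E c w) v q /\ path (remE E w c) v q.
Proof.
move=> pq cq.
have allP' : all (predC1 c) (v :: q).
  apply/allP => y ys /=; apply/eqP => yc; subst y; by rewrite ys in cq.
split; apply: (sub_in_path (P := predC1 c)) allP' pq => i j /= ic jc Eij;
  by rewrite /remE Eij (negbTE ic) (negbTE jc) /= ?andbF.
Qed.

Lemma esum_rem' E F (a b : 'I_d) : symmetric E -> E a b -> a != b -> (F b a = F a b) ->
  esum E F = F a b + esum (remE E a b) F.
Proof.
move=> sE Eab; rewrite neq_ltn => /orP[lab | lba] Fs.
  exact: esum_rem.
have Eba : E b a by rewrite sE.
rewrite (esum_rem _ lba Eba) Fs; congr (_ + _).
by apply: eq_bigl => q; rewrite remE_swap.
Qed.

Lemma esum_path (F : 'I_d -> 'I_d -> R) p : forall E k, symmetric E ->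
  path E k p -> uniq (k :: p) ->
  (forall i j, E i j -> 0 <= F i j) -> (forall i j, E i j -> F i j = F j i) ->
  \sum_(pe <- path_edges k p) F pe.1 pe.2 <= esum E F.
Proof.
elim: p => [|v p IH] E k sE pth un F0 Fs.
  by rewrite /path_edges /= big_nil; apply: sumr_ge0 => q /andP[_]; apply: F0.
move: pth => /= /andP[Ekv pth]; move: un => /= /andP[kn un].
have kv : k != v by apply/eqP => h; rewrite h in_cons eqxx in kn.
rewrite /path_edges /= big_cons /= (esum_rem' (F:=F) sE Ekv kv).
  2: by apply: Fs; rewrite sE.
apply: lerD => //.
have [pr _] := @path_rem E k v v p pth kn.
apply: IH => //.
- exact: remE_sym.
- by move=> i j /remE_sub; apply: F0.
- by move=> i j /remE_sub; apply: Fs.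
Qed.

Lemma path_edgesE (k v : 'I_d) p : path_edges k (v :: p) = (k, v) :: path_edges v p.
Proof. by []. Qed.

Lemma path_edges_E E k p (u v : 'I_d) : path E k p -> (u, v) \in path_edges k p -> E u v.
Proof.
elim: p k => [|w p IH] k //= /andP[Ekw pth].
rewrite path_edgesE in_cons => /orP[/eqP [-> ->] // | h].
exact: IH pth h.
Qed.

Lemma le_bigmax (T : eqType) (s : seq T) (F : T -> R) y : y \in s ->
  F y <= \big[Num.max/0]_(z <- s) F z.
Proof.
elim: s => [|z s IH] //; rewrite in_cons big_cons => /orP[/eqP->|ys].
  by rewrite le_max lexx.
by rewrite le_max IH ?orbT.
Qed.

Lemma path_max_ge (f : 'I_d -> 'I_d -> R) k p (u v : 'I_d) :
  (u, v) \in path_edges k p -> f u v <= path_max f k p.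
Proof. by move=> h; rewrite /path_max (le_bigmax (fun ij => f ij.1 ij.2) h). Qed.

Lemma path_max_attain E (f : 'I_d -> 'I_d -> R) p : forall k,
  path E k p -> (forall i j, E i j -> 0 < f i j) -> p != [::] ->
  exists p1 v p2, p = p1 ++ v :: p2 /\ path_max f k p = f (last k p1) v.
Proof.
elim: p => [|v p IH] k //= /andP[Ekv pth] fpos _.
have fkv := fpos _ _ Ekv.
have -> : path_max f k (v :: p) = Num.max (f k v) (path_max f v p).
  by rewrite /path_max path_edgesE big_cons.
case: p IH pth => [|w p] IH pth.
  exists [::], v, [::]; split => //=.
  by rewrite /path_max /path_edges /= big_nil max_l // ltW.
have [p1 [u [p2 [-> hm]]]] := IH v pth fpos isT.
case: (leP (path_max f v (p1 ++ u :: p2)) (f k v)) => h.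
  by exists [::], v, (p1 ++ u :: p2); split => //=; rewrite max_l.
by exists (v :: p1), u, p2; split => //=; rewrite max_r ?ltW.
Qed.

Lemma telescope (th ga : 'I_d -> 'I_d -> R) x (a b : R) p : forall k,
  0 <= a -> 0 <= b ->
  (forall u v, (u, v) \in path_edges k p -> a <= (th u v)^-1 - 1 /\ b <= (ga u v)^-1 - 1) ->
  a * pos (x k - x (last k p)) + b * pos (x (last k p) - x k) <=
  \sum_(pe <- path_edges k p) Qf th ga x pe.1 pe.2.
Proof.
elim: p => [|v p IH] k a0 b0 hyp.
  by rewrite /path_edges /= big_nil subrr /pos maxxx !mulr0 addr0.
rewrite path_edgesE big_cons /=.
have [ha hb] : a <= (th k v)^-1 - 1 /\ b <= (ga k v)^-1 - 1.
  by apply: hyp; rewrite path_edgesE mem_head.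
have IH' : a * pos (x v - x (last v p)) + b * pos (x (last v p) - x v) <=
  \sum_(pe <- path_edges v p) Qf th ga x pe.1 pe.2.
  by apply: IH => // u w h; apply: hyp; rewrite path_edgesE in_cons h orbT.
set L := last v p.
have h1 : pos (x k - x L) <= pos (x k - x v) + pos (x v - x L).
  by have := pos_add (x k - x v) (x v - x L); rewrite addrA subrK.
have h2 : pos (x L - x k) <= pos (x L - x v) + pos (x v - x k).
  by have := pos_add (x L - x v) (x v - x k); rewrite addrA subrK.
have h1' := ler_wpM2l a0 h1; have h2' := ler_wpM2l b0 h2.
have h3 := ler_wpM2r (pos_ge0 (x k - x v)) ha.
have h4 := ler_wpM2r (pos_ge0 (x v - x k)) hb.
rewrite /Qf /=; move: IH'; rewrite -/L; move: h1' h2' h3 h4; rewrite !mulrDr; lra.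
Qed.

Lemma par_exists (G : rel 'I_d) (r : 'I_d) : (forall w, connect G r w) ->
  exists (par : 'I_d -> 'I_d) (h : 'I_d -> nat),
    forall w, w != r -> G (par w) w && (h (par w) < h w)%N.
Proof.
move=> conn.
pose P w := fun n => [exists t : n.-tuple 'I_d, path G r t && (last r t == w)].
have Hex : forall w, exists n, P w n.
  move=> w; case/connectP: (conn w) => q pq ->.
  by exists (size q); apply/existsP; exists (in_tuple q); rewrite /= pq eqxx.
pose h w := ex_minn (Hex w).
have hP : forall w, P w (h w) by move=> w; rewrite /h; case: ex_minnP.
have hmin : forall w n, P w n -> (h w <= n)%N.
  by move=> w n; rewrite /h; case: ex_minnP => m _ H /H.
have step : forall w, w != r -> exists u, G u w && (h u < h w)%N.
  move=> w wr; have := hP w; case/existsP => t /andP[].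
  have st := size_tuple t.
  move: st; case/lastP: (tval t) => [|q u] /=.
    by move=> _ _ /eqP rw; rewrite rw eqxx in wr.
  rewrite rcons_path last_rcons size_rcons => sz /andP[pq Gu] /eqP uw; subst u.
  exists (last r q); rewrite Gu /=.
  apply: (@leq_trans (size q).+1); last by rewrite sz.
  by apply: hmin; apply/existsP; exists (in_tuple q); rewrite /= pq eqxx.
exists (fun w => odflt r [pick u | G u w && (h u < h w)%N]), h.
move=> w wr; case: pickP => [u //| none].
by have [u hu] := step w wr; rewrite none in hu.
Qed.

Lemma par_sum E (F : 'I_d -> 'I_d -> R) (r : 'I_d) (par : 'I_d -> 'I_d) (h : 'I_d -> nat) :
  symmetric E ->
  (forall w, w != r -> E (par w) w && (h (par w) < h w)%N) ->
  (forall i j, E i j -> 0 <= F i j) -> (forall i j, E i j -> F i j = F j i) ->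
  \sum_(w | w != r) F w (par w) <= esum E F.
Proof.
move=> sE hp F0 Fs.
pose nrm (w : 'I_d) := if (w < par w)%N then (w, par w) else (par w, w).
pose T := [set w : 'I_d | w != r].
have e1 : \sum_(w | w != r) F w (par w) = \sum_(w in T) F (nrm w).1 (nrm w).2.
  apply: eq_big => [w|w wr]; first by rewrite inE.
  rewrite /nrm; case: ifP => //= _; apply: Fs.
  by rewrite sE; case/andP: (hp w wr).
have inj : {in T &, injective nrm}.
  move=> w1 w2; rewrite !inE => w1r w2r.
  have := hp w1 w1r; have := hp w2 w2r.
  rewrite /nrm; case: ifP => _; case: ifP => _ /andP[_ h2] /andP[_ h1] [e e'] //.
  - by rewrite -e in h2; rewrite e' in h1; have := ltn_trans h1 h2; rewrite ltnn.
  - by rewrite e in h1; rewrite -e' in h2; have := ltn_trans h1 h2; rewrite ltnn.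
rewrite e1 -(big_imset (fun q => F q.1 q.2) inj) /=.
rewrite /esum [X in _ <= X](bigID (fun q : 'I_d * 'I_d => q \in [set nrm x | x in T])) /=.
have -> : \sum_(i : 'I_d * 'I_d | ((i.1 < i.2)%N && E i.1 i.2) && (i \in [set nrm x | x in T])) F i.1 i.2
   = \sum_(i in [set nrm x | x in T]) F i.1 i.2.
  apply: eq_bigl => q; case: (boolP (q \in _)) => [/imsetP [w wT ->]|]; rewrite ?andbF ?andbT //.
  move: wT; rewrite inE => wr; have /andP[Ep hw] := hp w wr.
  have wp : (w : nat) != par w.
    by apply/eqP => /val_inj e; rewrite -e ltnn in hw.
  rewrite /nrm; case: ifP => [lt|nlt] /=.
    by rewrite lt /= sE.
  by move: wp; rewrite neq_ltn nlt /= => -> /=.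
rewrite lerDl; apply: sumr_ge0 => q /andP[/andP[_ Eq] _]; exact: F0.
Qed.

End Gen.

Unset Implicit Arguments.

Theorem proposition9 (R : realType) (d : nat) (e : rel 'I_d)
    (th ga : 'I_d -> 'I_d -> R) :
  is_tree e ->
  (forall i j, e i j -> 0 < th i j < 1) ->
  (forall i j, e i j -> 0 < ga i j < 1) ->
  (forall i j, e i j -> th j i = ga i j) ->
  forall (k l : 'I_d) (p : seq 'I_d),
    (k < l)%N ->
    uniq (k :: p) -> path e k p -> last k p = l ->
    let tmax := path_max th k p in
    let gmax := path_max ga k p in
    forall xk xl : R, 0 <= xk -> 0 <= xl ->
      (* g_{k,l}(xk,xl) = min over x_s >= 0 (s <> k,l) of g(x) equals the formula *)
      (forall x : 'I_d -> R, (forall s, 0 <= x s) -> x k = xk -> x l = xl ->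
         edge_gauge tmax gmax xk xl <= tree_gauge e th ga x) /\
      (exists x : 'I_d -> R, [/\ forall s, 0 <= x s, x k = xk, x l = xl &
         tree_gauge e th ga x = edge_gauge tmax gmax xk xl]).
Proof.
move=> [[irr sE] conn nc] thb gab thga k l p kl un pth lst tmax gmax xk xl xk0 xl0.
rewrite {}/tmax {}/gmax.
have pn : p != [::] by case: p lst pth un => //= lk; rewrite lk ltnn in kl.
have thpos : forall i j, e i j -> 0 < th i j by move=> i j /thb /andP[].
have gapos : forall i j, e i j -> 0 < ga i j by move=> i j /gab /andP[].
have inv0 : forall t : R, 0 < t < 1 -> 0 <= t^-1 - 1.
  by move=> t /andP[t0 t1]; rewrite subr_ge0 ltW // invf_gt1.
have Qs : forall x i j, e i j -> Qf th ga x i j = Qf th ga x j i.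
  move=> x i j eij; have eji : e j i by rewrite sE.
  by rewrite /Qf (thga _ _ eij) -(thga _ _ eji) addrC.
have Q0 : forall x i j, e i j -> 0 <= Qf th ga x i j.
  move=> x i j eij; rewrite /Qf.
  apply: addr_ge0; apply: mulr_ge0; rewrite ?pos_ge0 //; apply: inv0;
  by [apply: thb | apply: gab].
have LB : forall x, (forall s, 0 <= x s) -> x k = xk -> x l = xl ->
    edge_gauge (path_max th k p) (path_max ga k p) xk xl <= tree_gauge e th ga x.
  move=> x x0 xke xle.
  rewrite tree_gaugeE edge_gaugeE.
  have Ph : forall r, x r <= \sum_v x v - esum e (fun i j => Num.min (x i) (x j)).
    move=> r; have := @forest_lb R d _ e [set r] x (erefl _) sE nc x0.
    by rewrite big_set1; apply => s t; rewrite !inE => /eqP-> /eqP->.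
  have esQ := esum_path (F := Qf th ga x) sE pth un (Q0 x) (Qs x).
  have [p1 [v [p2 [pe tm]]]] := path_max_attain pth thpos pn.
  have [q1 [w [q2 [qe gm]]]] := path_max_attain pth gapos pn.
  have ev : e (last k p1) v.
    by move: pth; rewrite pe cat_path => /andP[_] /= /andP[].
  have ew : e (last k q1) w.
    by move: pth; rewrite qe cat_path => /andP[_] /= /andP[].
  have A0 : 0 <= (path_max th k p)^-1 - 1 by rewrite tm; apply: inv0; apply: thb.
  have B0 : 0 <= (path_max ga k p)^-1 - 1 by rewrite gm; apply: inv0; apply: gab.
  have tp : 0 < path_max th k p by rewrite tm; apply: thpos.
  have gp : 0 < path_max ga k p by rewrite gm; apply: gapos.
  have := @telescope R d th ga x _ _ p k A0 B0.
  rewrite lst xke xle => tele.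
  have : \sum_(pe <- path_edges k p) Qf th ga x pe.1 pe.2 >=
     ((path_max th k p)^-1 - 1) * pos (xk - xl) + ((path_max ga k p)^-1 - 1) * pos (xl - xk).
    apply: tele => u v' h.
    have euv := path_edges_E pth h.
    rewrite !lerD2r !lef_pV2 ?posrE ?thpos ?gapos //.
    by rewrite !(path_max_ge _ h).
  have mx : Num.max xk xl <= \sum_v x v - esum e (fun i j => Num.min (x i) (x j)).
    by rewrite ge_max -xke -xle !Ph.
  lra.
have UB : forall p1 v p2, p = p1 ++ v :: p2 -> exists x, [/\ forall s, 0 <= x s, x k = xk, x l = xl &
    tree_gauge e th ga x <= Num.max xk xl + ((th (last k p1) v)^-1 - 1) * pos (xk - xl)
       + ((ga (last k p1) v)^-1 - 1) * pos (xl - xk)].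
  move=> p1 v p2 pe.
  set u := last k p1.
  move: pth un lst; rewrite pe cat_path => /andP[pth1 /= /andP[euv pth2]].
  move=> un'; have : uniq ((k :: p1) ++ v :: p2) by exact: un'.
  rewrite cat_uniq => /and3P[_ dis _].
  rewrite last_cat /= -/u => lst.
  have vn : v \notin k :: p1.
    by apply: contra dis => h; apply/hasP; exists v => //; rewrite mem_head.
  have un2 : u \notin v :: p2.
    by apply: contra dis => h; apply/hasP; exists u => //; apply: mem_last.
  have uv : u != v by apply: contra vn => /eqP <-; apply: mem_last.
  set E' := remE e u v.
  have sE' : symmetric E' := remE_sym u v sE.
  have cs := sym_connect_sym sE'.
  have nuv := noconnect_rem sE nc euv uv.
  have F1 : ~~ connect E' v u by rewrite cs.
  have [_ pr1] := @path_rem d e v u k p1 pth1 vn.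
  have F2 : connect E' k u := path_connect pr1 (mem_last k p1).
  have [pr2 _] := @path_rem d e u v v p2 pth2 un2.
  have F3 : connect E' v l by rewrite -lst; apply: (path_connect pr2 (mem_last v p2)).
  have F4 : ~~ connect E' v k.
    by apply/negP => vk; have := connect_trans vk F2; rewrite (negbTE F1).
  pose x w := if connect E' v w then xl else xk.
  have xu : x u = xk by rewrite /x (negbTE F1).
  have xv : x v = xl by rewrite /x connect0.
  have xE : forall i j, E' i j -> x i = x j.
    move=> i j Eij; rewrite /x.
    have -> : connect E' v i = connect E' v j; last by [].
    apply/idP/idP => H; first exact: connect_trans H (connect1 Eij).
    by apply: connect_trans H _; rewrite cs; apply: connect1.
  have xm : forall w, Num.min xk xl <= x w.
    by move=> w; rewrite /x; case: ifP; rewrite ge_min lexx ?orbT.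
  exists x; split.
  - by move=> s; rewrite /x; case: ifP.
  - by rewrite /x (negbTE F4).
  - by rewrite /x F3.
  rewrite tree_gaugeE.
  have [par [h hp]] := par_exists (conn v).
  have ps := @par_sum R d e (fun i j => Num.min (x i) (x j)) v par h sE hp.
  have {}ps : \sum_(w | w != v) Num.min (x w) (x (par w)) <= esum e (fun i j => Num.min (x i) (x j)).
    apply: ps => i j _; last by rewrite minC.
    by rewrite le_min; apply/andP; split; rewrite /x; case: ifP.
  have key : forall w, w != v -> w != u -> x (par w) = x w.
    move=> w wv wu; have /andP[Ep _] := hp w wv; apply: xE.
    by rewrite /E' /remE Ep (negbTE wv) (negbTE wu) !andbF.
  have s1 : \sum_(w | w != v) Num.min (x w) (x (par w)) =
      Num.min (x u) (x (par u)) + \sum_(w | (w != v) && (w != u)) x w.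
    rewrite (bigD1 u) //=; congr (_ + _); apply: eq_bigr => w /andP[wv wu].
    by rewrite key // minxx.
  have s2 : \sum_w x w = x v + (x u + \sum_(w | (w != v) && (w != u)) x w).
    by rewrite (bigD1 v) //=; congr (_ + _); rewrite (bigD1 u).
  have mu : Num.min xk xl <= Num.min (x u) (x (par u)) by rewrite le_min !xm.
  have mm := addr_min_max xk xl.
  have eQ : esum e (Qf th ga x) = Qf th ga x u v + esum E' (Qf th ga x).
    by apply: esum_rem' => //; rewrite (Qs _ _ _ euv).
  have eQ0 : esum E' (Qf th ga x) = 0.
    rewrite /esum big1 // => q /andP[_ Eq].
    by rewrite /Qf (xE _ _ Eq) subrr /pos maxxx !mulr0 addr0.
  move: eQ; rewrite eQ0 addr0 /Qf xu xv => ->.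
  rewrite s2 xu xv; move: ps; rewrite s1; lra.
split; first exact: LB.
case: (leP xl xk) => hkl.
  have [p1 [v [p2 [pe tm]]]] := path_max_attain pth thpos pn.
  have [x [x0 xke xle xub]] := UB p1 v p2 pe.
  exists x; split => //; apply: le_anti; rewrite LB // andbT.
  have P0 : pos (xl - xk) = 0 by apply: pos_eq0; rewrite subr_le0.
  rewrite edge_gaugeE P0 mulr0 addr0 tm.
  by move: xub; rewrite P0 mulr0 addr0.
have [p1 [v [p2 [pe gm]]]] := path_max_attain pth gapos pn.
have [x [x0 xke xle xub]] := UB p1 v p2 pe.
exists x; split => //; apply: le_anti; rewrite LB // andbT.
have P0 : pos (xk - xl) = 0 by apply: pos_eq0; rewrite subr_le0 ltW.
rewrite edge_gaugeE P0 mulr0 addr0 gm.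
by move: xub; rewrite P0 mulr0 addr0.
Qed.
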